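(* Let $\mathcal{F}$ be a complete lattice cone of functions on a set $\Omega$ which contains all real constant functions. Let $p\in\mathcal{F}$ be real-valued and let $\xi\colon\mathbb{R}\to\mathbb{R}$ be convex and non-decreasing. Then $\xi\circ p\in\mathcal{F}$.
   Context: A complete lattice cone is a set of functions on $\Omega$ with values in $(-\infty,\infty]$, closed under nonnegative linear combinations and under pointwise suprema of arbitrary families. *)

(* Defs.v *)
From HB Require Import structures.
From mathcomp Require Import all_boot all_order all_algebra.
From mathcomp Require Import all_classical all_reals all_analysis.
Set Implicit Arguments. Unset Strict Implicit. Unset Printing Implicit Defensive.
Import Order.TTheory GRing.Theory Num.Theory.
Local Open Scope classical_set_scope.
Local Open Scope ring_scope.
Local Open Scope ereal_scope.

(* A complete lattice cone on Omega: a set of functions Omega -> (-oo, +oo]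
   closed under nonnegative linear combinations (with 0 * +oo = 0, the
   convention of \bar R) and under pointwise suprema of arbitrary
   (nonempty) families. *)
Definition complete_lattice_cone (R : realType) (Omega : Type)
    (F : set (Omega -> \bar R)) : Prop :=
  [/\ (forall f, F f -> forall x, f x != -oo),
      F (fun _ => 0),
      (forall (f g : Omega -> \bar R) (a b : R), F f -> F g ->
          (0 <= a)%R -> (0 <= b)%R ->
          F (fun x => a%:E * f x + b%:E * g x)) &
      (forall G : set (Omega -> \bar R), G !=set0 -> G `<=` F ->
          F (fun x => ereal_sup [set g x | g in G]))].

(* Main.v *)
Require Import Defs.
From HB Require Import structures.
From mathcomp Require Import all_boot all_order all_algebra.
From mathcomp Require Import all_classical all_reals all_analysis.
From mathcomp Require Import ring lra.
Import Order.TTheory GRing.Theory Num.Theory.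
Local Open Scope classical_set_scope.
Local Open Scope ring_scope.

Lemma conv3 (R : realType) (xi : R -> R) :
  convex_function (R := R) (E := R^o) setT xi ->
  forall s t u, s < t -> t < u ->
  (u - s) * xi t <= (u - t) * xi s + (t - s) * xi u.
Proof.
move=> H s t u st tu.
have us : 0 < u - s by lra.
have usn : u - s != 0 by rewrite gt_eqF.
have l0 : 0 <= (u - t) / (u - s) by apply: divr_ge0; lra.
have l1 : (u - t) / (u - s) <= 1 by rewrite ler_pdivrMr //; lra.
have := H (Itv01 l0 l1) s u (mem_set I) (mem_set I).
rewrite /= !convRE /=.
have -> : conv (Itv01 l0 l1) (s : convex_lmodType R^o) u = t.
  rewrite /conv /= /GRing.scale /=.
  change ((u - t) / (u - s) * s + (1 - (u - t) / (u - s)) * u = t :> R).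
  by field.
rewrite /unstable.onem => /(ler_wpM2l (ltW us)).
suff -> : (u - s) * ((u - t) / (u - s) * xi s + (1 - (u - t) / (u - s)) * xi u)
   = (u - t) * xi s + (t - s) * xi u by [].
by field.
Qed.

Lemma slope_le (R : realType) (xi : R -> R) :
  convex_function (R := R) (E := R^o) setT xi ->
  forall s t u, s < t -> t < u ->
  (xi t - xi s) / (t - s) <= (xi u - xi t) / (u - t).
Proof.
move=> H s t u st tu; have := @conv3 R xi H s t u st tu.
have ts : 0 < t - s by lra.
have ut : 0 < u - t by lra.
rewrite ler_pdivrMr // mulrAC ler_pdivlMr // => h.
nra.
Qed.

Lemma support (R : realType) (xi : R -> R) :
  convex_function (R := R) (E := R^o) setT xi ->
  {homo xi : x y / x <= y} ->
  forall t0, exists a, 0 <= a /\ forall t, xi t0 + a * (t - t0) <= xi t.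
Proof.
move=> H M t0.
pose L := [set (xi t0 - xi s) / (t0 - s) | s in [set s | s < t0]].
have ubL : forall u, t0 < u -> ubound L ((xi u - xi t0) / (u - t0)).
  move=> u tu _ [s /= st <-]; exact: slope_le.
have Ln : L !=set0 by exists ((xi t0 - xi (t0 - 1)) / (t0 - (t0 - 1))); exists (t0 - 1) => //=; lra.
have hs : has_sup L.
  split => //; exists ((xi (t0 + 1) - xi t0) / (t0 + 1 - t0)); apply: ubL; lra.
exists (sup L); split.
  apply: le_trans (sup_upper_bound hs (_ : L ((xi t0 - xi (t0 - 1)) / (t0 - (t0 - 1))))).
    apply: divr_ge0; last lra.
    rewrite subr_ge0; apply: M; lra.
  by exists (t0 - 1) => //=; lra.
move=> t; case: (ltgtP t t0) => [tt|tt|->]; last by rewrite subrr mulr0 addr0.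
- have := sup_upper_bound hs (_ : L ((xi t0 - xi t) / (t0 - t))).
  have p : 0 < t0 - t by lra.
  rewrite ler_pdivrMr // => h.
  have : forall x, x \in [set t] -> True by [].
  move=> _; have h2 : L ((xi t0 - xi t) / (t0 - t)) by exists t.
  move: (h h2) => h3. nra.
- have := ge_sup Ln (ubL t tt).
  have p : 0 < t - t0 by lra.
  rewrite ler_pdivlMr // => h. nra.
Qed.

Theorem mainTheorem6 (R : realType) (Omega : Type) (F : set (Omega -> \bar R))
  (p : Omega -> R) (xi : R -> R) :
  complete_lattice_cone F ->
  (forall c : R, F (fun _ => c%:E)) ->
  F (fun x => (p x)%:E) ->
  convex_function (R := R) (E := R^o) setT xi ->
  {homo xi : x y / x <= y} ->
  F (fun x => (xi (p x))%:E).
Proof.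
case=> _ _ Hlin Hsup Hc Hp H M.
pose G := [set g : Omega -> \bar R | exists a b, [/\ 0 <= a,
   (forall t, a * t + b <= xi t) &
   g = fun x => (a%:E * (p x)%:E + 1%:E * (fun _ => b%:E) x)%E]].
have GF : G `<=` F.
  move=> g [a [b [a0 _ ->]]]; apply: Hlin => //.
have line : forall t0, exists a b, [/\ 0 <= a, (forall t, a * t + b <= xi t) & a * t0 + b = xi t0].
  move=> t0; have [a [a0 ha]] := @support R xi H M t0.
  exists a, (xi t0 - a * t0); split => //; last by ring.
  move=> t; have := ha t; lra.
have Gn : G !=set0.
  have [a [b [a0 hb _]]] := line 0.
  by exists (fun x => (a%:E * (p x)%:E + 1%:E * (fun _ => b%:E) x)%E); exists a, b.
suff -> : (fun x => (xi (p x))%:E) = (fun x => ereal_sup [set g x | g in G]).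
  exact: Hsup.
apply: funext => x; apply: le_anti; apply/andP; split.
  have [a [b [a0 hb he]]] := line (p x).
  apply: ereal_sup_ubound; exists (fun x => (a%:E * (p x)%:E + 1%:E * (fun _ => b%:E) x)%E).
    by exists a, b.
  by rewrite /= mul1e -EFinM -EFinD he.
apply: ge_ereal_sup => _ [g [a [b [a0 hb ->]]] <-].
by rewrite /= mul1e -EFinM -EFinD lee_fin.
Qed.
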